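(* Let $(X,\Sigma)$ be a measurable space, $(\mathcal{E}_t)_{t\ge0}$ a process of pavings, $\mathbf{F}_0^2\subseteq\mathbf{F}\times\mathbf{F}$ a nonempty set of pairs, $\boldsymbol{\mu}=(\mu_t)_{t\ge0}$ a nonincreasing family of monotone measures on $\Sigma$, and $\mathscr{A}=\{\mathsf{A}_t(\cdot|E)\colon E\in\mathcal{E}_t,\,t\ge0\}$ a nonincreasing parametric family of conditional aggregation operators which is $c$-quasi-subadditive on $\mathbf{F}_0^2$ (for some $c\in[1,\infty)$). Then $$\boldsymbol{\mu}_{\mathscr{A}}(f+g,ct)\le\boldsymbol{\mu}_{\mathscr{A}}(f,\lambda t)\vee\boldsymbol{\mu}_{\mathscr{A}}(g,(1-\lambda)t)$$ for every $t\ge0$, every $\lambda\in(0,1)$ and every $(f,g)\in\mathbf{F}_0^2$.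
   Context: $a\vee b=\max\{a,b\}$. $\Sigma^0=\Sigma\setminus\{\emptyset\}$. $\mathbf{F}$ denotes the set of all $\Sigma$-measurable, nonnegative, bounded functions $f\colon X\to[0,\infty)$. A monotone measure is a map $\mu\colon\Sigma\to[0,\infty]$ with $\mu(B)\le\mu(C)$ whenever $B\subseteq C$, $\mu(\emptyset)=0$ and $\mu(X)>0$. For $E\in\Sigma^0$, a conditional aggregation operator (CAO) w.r.t. $E$ is a map $\mathsf{A}(\cdot|E)\colon\mathbf{F}\to[0,\infty]$ such that (C1) $\mathsf{A}(f|E)\le\mathsf{A}(g|E)$ whenever $f(x)\le g(x)$ for all $x\in E$, and (C2) $\mathsf{A}(\mathbf{1}_{X\setminus E}|E)=0$. A process of pavings is a family $(\mathcal{E}_t)_{t\ge0}$ with $\emptyset\in\mathcal{E}_t\subseteq\Sigma$ for all $t$; $\mathcal{E}_t^0=\mathcal{E}_t\setminus\{\emptyset\}$. A parametric family of CAOs (pFCA) $\{\mathsf{A}_t(\cdot|E)\colon E\in\mathcal{E}_t,\,t\ge0\}$ consists of CAOs $\mathsf{A}_t(\cdot|E)$ w.r.t. $E$ for each $t$ and $E\in\mathcal{E}_t^0$, with the convention $\mathsf{A}_t(\cdot|\emptyset)=\infty$. The generalized level measure is $\boldsymbol{\mu}_{\mathscr{A}}(f,t)=\sup\{\mu_t(E)\colon \mathsf{A}_t(f|E)\ge t,\ E\in\mathcal{E}_t\}$ for $t\ge0$. $\boldsymbol{\mu}$ is nonincreasing if $\mu_s(E)\ge\mu_t(E)$ for all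 $E\in\Sigma$ and $s<t$. The pFCA is nonincreasing if $\mathcal{E}_t\subseteq\mathcal{E}_s$ and $\mathsf{A}_s(f|E)\ge\mathsf{A}_t(f|E)$ for all $f\in\mathbf{F}$, $E\in\mathcal{E}_t^0$, $0\le s<t$. It is $c$-quasi-subadditive on $\mathbf{F}_0^2$ if $c\in[1,\infty)$ and $\mathsf{A}_t(f+g|E)\le c(\mathsf{A}_t(f|E)+\mathsf{A}_t(g|E))$ for all $(f,g)\in\mathbf{F}_0^2$, all $E\in\mathcal{E}_t^0$ and all $t>0$. *)

(* Defs.v *)
From HB Require Import structures.
From mathcomp Require Import all_boot all_order all_algebra.
From mathcomp Require Import all_classical all_reals all_analysis.
Set Implicit Arguments. Unset Strict Implicit. Unset Printing Implicit Defensive.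
Import Order.TTheory GRing.Theory Num.Theory.
Local Open Scope classical_set_scope.
Local Open Scope ring_scope.
Local Open Scope ereal_scope.

Section Defs.
Context {d : measure_display} {X : measurableType d} {R : realType}.

Definition Fset (f : X -> R) : Prop :=
  measurable_fun setT f /\ (forall x, (0 <= f x)%R) /\ exists M : R, forall x, (f x <= M)%R.

Definition monotone_measure (mu : set X -> \bar R) : Prop :=
  (forall B, measurable B -> 0 <= mu B) /\
  (forall B C, measurable B -> measurable C -> B `<=` C -> mu B <= mu C) /\
  mu set0 = 0 /\ 0 < mu setT.

Definition CAO (Ag : (X -> R) -> \bar R) (E : set X) : Prop :=
  (forall f, Fset f -> 0 <= Ag f) /\
  (forall f g, Fset f -> Fset g -> (forall x, E x -> (f x <= g x)%R) -> Ag f <= Ag g) /\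
  Ag (\1_(~` E)) = 0.

Definition process_of_pavings (Ecal : R -> set (set X)) : Prop :=
  forall t : R, (0 <= t)%R -> Ecal t set0 /\ Ecal t `<=` measurable.

Definition pFCA (Ecal : R -> set (set X)) (A : R -> set X -> (X -> R) -> \bar R) : Prop :=
  forall t : R, (0 <= t)%R -> forall E, Ecal t E -> E <> set0 -> CAO (A t E) E.

Definition nonincreasing_measures (mu : R -> set X -> \bar R) : Prop :=
  forall s t : R, (0 <= s)%R -> (s < t)%R -> forall E, measurable E -> mu t E <= mu s E.

Definition nonincreasing_pFCA (Ecal : R -> set (set X))
    (A : R -> set X -> (X -> R) -> \bar R) : Prop :=
  forall s t : R, (0 <= s)%R -> (s < t)%R ->
    Ecal t `<=` Ecal s /\
    (forall f E, Fset f -> Ecal t E -> E <> set0 -> A t E f <= A s E f).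

Definition quasi_subadditive (c : R) (F02 : set ((X -> R) * (X -> R)))
    (Ecal : R -> set (set X)) (A : R -> set X -> (X -> R) -> \bar R) : Prop :=
  (1 <= c)%R /\
  forall f g, F02 (f, g) -> forall t : R, (0 < t)%R ->
    forall E, Ecal t E -> E <> set0 ->
      A t E (f \+ g)%R <= c%:E * (A t E f + A t E g).

(* Generalized level measure; the empty set is admitted (A_t(.|emptyset) = oo). *)
Definition level_measure (mu : R -> set X -> \bar R) (Ecal : R -> set (set X))
    (A : R -> set X -> (X -> R) -> \bar R) (f : X -> R) (t : R) : \bar R :=
  ereal_sup [set mu t E | E in [set E | Ecal t E /\ (E = set0 \/ t%:E <= A t E f)]].

End Defs.

(* Main.v *)
Require Import Defs.
From HB Require Import structures.
From mathcomp Require Import all_boot all_order all_algebra.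
From mathcomp Require Import all_classical all_reals all_analysis.
Import Order.TTheory GRing.Theory Num.Theory.
Local Open Scope classical_set_scope.
Local Open Scope ring_scope.

Theorem proposition3p14 (d : measure_display) (X : measurableType d) (R : realType)
  (Ecal : R -> set (set X)) (F02 : set ((X -> R) * (X -> R)))
  (mu : R -> set X -> \bar R) (A : R -> set X -> (X -> R) -> \bar R) (c : R) :
  process_of_pavings Ecal ->
  F02 `<=` [set p | Fset p.1 /\ Fset p.2] ->
  F02 !=set0 ->
  (forall t : R, 0 <= t -> monotone_measure (mu t)) ->
  nonincreasing_measures mu ->
  pFCA Ecal A ->
  nonincreasing_pFCA Ecal A ->
  quasi_subadditive c F02 Ecal A ->
  forall (t lam : R), 0 <= t -> 0 < lam < 1 ->
  forall f g, F02 (f, g) ->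
    (level_measure mu Ecal A (f \+ g)%R (c * t)%R
     <= maxe (level_measure mu Ecal A f (lam * t)%R)
             (level_measure mu Ecal A g ((1 - lam) * t)%R))%E.
Proof.
move=> hP hF _ hmu hnm hA hnA [c1 hqs] t lam t0 /andP[l0 l1] f g fg.
have [Ff Fg] := hF _ fg; rewrite /= in Ff Fg.
have c0 : 0 < c by apply: lt_le_trans c1.
have lt0 : 0 <= lam * t by rewrite mulr_ge0 // ltW.
have mt0 : 0 <= (1 - lam) * t by rewrite mulr_ge0 // subr_ge0 ltW.
have ct0 : 0 <= c * t by rewrite mulr_ge0 // ltW.
apply: ge_ereal_sup => _ [E [EE HE] <-].
have incl : forall (h : X -> R) (s : R), 0 <= s -> s <= c * t -> Ecal s E ->
    (E = set0 \/ (s%:E <= A s E h)%E) ->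
    (mu (c * t)%R E <= level_measure mu Ecal A h s)%E.
  move=> h s s0 sct Es HEs.
  apply: le_ereal_sup_tmp; exists (mu s E); first by exists E.
  have [->|sne] := eqVneq s (c * t); first by [].
  apply: hnm => //; first by rewrite lt_neqAle sne.
  by case: (hP _ ct0) => _ /(_ _ EE).
have lct : lam * t <= c * t by rewrite ler_wpM2r // (le_trans (ltW l1) c1).
have mct : (1 - lam) * t <= c * t.
  by rewrite ler_wpM2r // (le_trans _ c1) // gerBl ltW.
case: HE => [E0|HE].
  rewrite le_max; apply/orP; left.
  apply: incl => //; last by left.
  by rewrite E0; case: (hP _ lt0).
have [Ene|En] := eqVneq E set0.
  rewrite le_max; apply/orP; left.
  apply: incl => //; last by left.
  by rewrite Ene; case: (hP _ lt0).
have Ene : E <> set0 by apply/eqP.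
have [t00|tp] := eqVneq t 0.
  subst t.
  rewrite le_max; apply/orP; left.
  apply: (incl f (lam * 0)) => //; rewrite !mulr0 in EE *; rewrite ?mulr0 //.
  right.
  by case: (hA _ (lexx 0) _ EE Ene) => /(_ f Ff).
have tp' : 0 < t by rewrite lt_neqAle eq_sym tp.
have hsum := hqs _ _ fg _ (mulr_gt0 c0 tp') _ EE Ene.
have key : ((lam * t)%:E <= A (c * t)%R E f)%E \/ (((1 - lam) * t)%:E <= A (c * t)%R E g)%E.
  case: (leP (lam * t)%:E (A (c * t)%R E f)) => [|ha]; first by left.
  case: (leP ((1 - lam) * t)%:E (A (c * t)%R E g)) => [|hb]; first by right.
  have hab := lteD ha hb.
  rewrite -EFinD -mulrDl addrCA subrr addr0 mul1r in hab.
  have : (c%:E * (A (c * t)%R E f + A (c * t)%R E g) < (c * t)%:E)%E.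
    by rewrite EFinM lte_pmul2l.
  by rewrite ltNge (le_trans HE hsum).
have tl : forall s, 0 <= s -> s < 1 -> s * t < c * t.
  by move=> s s0 s1; rewrite ltr_pM2r // (lt_le_trans s1 c1).
have step : forall (h : X -> R) s, Fset h -> 0 <= s -> s < 1 ->
    ((s * t)%:E <= A (c * t)%R E h)%E ->
    (mu (c * t)%R E <= level_measure mu Ecal A h (s * t))%E.
  move=> h s Fh s0 s1 hh.
  have st0 : 0 <= s * t by rewrite mulr_ge0.
  have [sub mon] := hnA _ _ st0 (tl _ s0 s1).
  apply: incl => //; first exact: ltW (tl _ s0 s1).
    exact: sub.
  by right; apply: le_trans hh (mon _ _ Fh EE Ene).
case: key => hk; rewrite le_max; apply/orP; [left|right].
  by apply: step => //; apply: ltW.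
apply: step => //; first by rewrite subr_ge0 ltW.
by rewrite ltrBlDr ltrDl.
Qed.
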